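(* Let $m=2^{\ell-1}$ with $\ell>1$ and let $G=SD_{4m}=\langle a,b\mid a^{2m}=b^2=e,\ bab=a^{m-1}\rangle$ be the semidihedral group. Let $S\subseteq G\setminus\{e\}$ with $S=S^{-1}$ be such that $\mathrm{Cay}(G,S)$ is a bipartite distance-regular graph with diameter $3$ (intersection array $\{k,k-1,k-\mu;1,\mu,k\}$), and let $H$ be the part of this bipartite graph containing the identity element. Then $G$ contains an involution outside $H$, so that $G\cong H\rtimes\mathbb{Z}_2$.
   Context: For a finite group $G$ with identity $e$ and a subset $S\subseteq G\setminus\{e\}$ with $S=S^{-1}$, the Cayley graph $\mathrm{Cay}(G,S)$ has vertex set $G$, two vertices $a,b$ being adjacent iff $ab^{-1}\in S$. A connected graph of diameter $d$ is distance-regular with intersection array $\{b_0,\dots,b_{d-1};c_1,\dots,c_d\}$ if for all vertices $x,y$ at distance $i$, the number of neighbours of $x$ at distance $i+1$ (resp. $i-1$) from $y$ is $b_i$ (resp. $c_i$). *)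

(* Defs.v *)
From mathcomp Require Import all_boot fingroup morphism automorphism quotient gproduct.
Set Implicit Arguments. Unset Strict Implicit. Unset Printing Implicit Defensive.
Local Open Scope group_scope.

Definition cay_adj (gT : finGroupType) (S : {set gT}) (x y : gT) : bool :=
  x * y^-1 \in S.

Fixpoint ball (T : finType) (e : rel T) (i : nat) (x : T) : {set T} :=
  match i with
  | 0 => [set x]
  | i'.+1 => ball e i' x :|: [set y | [exists z in ball e i' x, e z y]]
  end.

Definition at_dist (T : finType) (e : rel T) (i : nat) (x y : T) : bool :=
  (y \in ball e i x) && ((i == 0) || (y \notin ball e i.-1 x)).

(* Distance-regular graph of diameter d with intersection array
   {b_0,...,b_{d-1}; c_1,...,c_d}, given as bs = [b_0;...;b_{d-1}],
   cs = [c_1;...;c_d]. *)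
Definition distance_regular (T : finType) (e : rel T) (d : nat)
    (bs cs : seq nat) : Prop :=
  [/\ size bs = d /\ size cs = d,
      (forall x y : T, y \in ball e d x),
      (exists x y : T, at_dist e d x y),
      (forall i x y, i < d -> at_dist e i x y ->
          #|[set z | e x z && at_dist e i.+1 z y]| = nth 0 bs i) &
      (forall i x y, 0 < i <= d -> at_dist e i x y ->
          #|[set z | e x z && at_dist e i.-1 z y]| = nth 0 cs i.-1)].

Definition bip_part (T : finType) (e : rel T) (x : T) : {set T} :=
  [set y | [exists i : 'I_#|T|, ~~ odd i && at_dist e i x y]].

(* Main.v *)
Require Import Defs.
From mathcomp Require Import all_boot fingroup morphism automorphism quotient gproduct cyclic zify.
Set Implicit Arguments. Unset Strict Implicit. Unset Printing Implicit Defensive.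
Local Open Scope group_scope.

Lemma in_ballS (T : finType) (r : rel T) i x y :
  (y \in ball r i.+1 x) = (y \in ball r i x) || [exists w in ball r i x, r w y].
Proof. by rewrite /= in_setU inE. Qed.

Lemma ball_S (T : finType) (r : rel T) i x : ball r i x \subset ball r i.+1 x.
Proof. by apply/subsetP=> y yi; rewrite in_ballS yi. Qed.

Lemma ball_mono (T : finType) (r : rel T) i j x :
  (i <= j)%N -> ball r i x \subset ball r j x.
Proof.
elim: j => [|j IH]; first by rewrite leqn0 => /eqP->.
rewrite leq_eqVlt => /orP[/eqP->//|/IH H].
exact: subset_trans H (ball_S _ _ _).
Qed.

Lemma ball_step (T : finType) (r : rel T) i x y z :
  y \in ball r i x -> r z x -> y \in ball r i.+1 z.
Proof.
elim: i y => [|i IH] y.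
  rewrite inE => /eqP-> rzx; rewrite in_ballS; apply/orP; right.
  by apply/existsP; exists z; rewrite inE eqxx rzx.
rewrite in_ballS => /orP[/IH H|/existsP [w /andP [wi rwy]]] rzx.
  by rewrite in_ballS (H rzx).
by rewrite in_ballS; apply/orP; right; apply/existsP; exists w; rewrite (IH w wi rzx) rwy.
Qed.

Lemma dist_uniq (T : finType) (r : rel T) i j x y :
  at_dist r i x y -> at_dist r j x y -> i = j.
Proof.
rewrite /at_dist.
have key : forall i j, (i < j)%N -> y \in ball r i x -> (j == 0) || (y \notin ball r j.-1 x) -> False.
  move=> i' j' lt yi /orP[/eqP j0|]; first by rewrite j0 in lt.
  by rewrite (subsetP (ball_mono r x (_ : i' <= j'.-1)%N)) //; lia.
case/andP=> yi ci /andP[yj cj].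
case: (ltngtP i j) => // lt; first by case: (key _ _ lt yi cj).
by case: (key _ _ lt yj ci).
Qed.

Lemma dist_ex (T : finType) (r : rel T) n x y :
  y \in ball r n x -> exists2 i, (i <= n)%N & at_dist r i x y.
Proof.
elim: n => [|n IH] H; first by exists 0 => //; rewrite /at_dist H.
case: (boolP (y \in ball r n x)) => [/IH [i ? ?]| Hn].
  by exists i => //; apply: leqW.
by exists n.+1 => //; rewrite /at_dist H /=.
Qed.

Lemma dist_le (T : finType) (r : rel T) x y i :
  (forall x y, y \in ball r 3 x) -> at_dist r i x y -> (i <= 3)%N.
Proof.
move=> Hall H; have [j jle Hj] := dist_ex (Hall x y).
by rewrite (dist_uniq H Hj).
Qed.

Lemma ballM (gT : finGroupType) (S : {set gT}) i x y g :
  (y * g \in ball (cay_adj S) i (x * g)) = (y \in ball (cay_adj S) i x).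
Proof.
elim: i y => [|i IH] y.
  by rewrite /= !inE; apply/eqP/eqP => [/mulIg|->].
rewrite !in_ballS IH; congr (_ || _).
apply/existsP/existsP => [[w /andP [wi ew]]|[w /andP[wi ew]]].
  exists (w * g^-1); rewrite -IH mulgVK wi /=.
  by move: ew; rewrite /cay_adj invMg mulgA.
exists (w * g); rewrite IH wi /=.
by rewrite /cay_adj invMg mulgA mulgK.
Qed.

Lemma distM (gT : finGroupType) (S : {set gT}) i x y g :
  at_dist (cay_adj S) i (x * g) (y * g) = at_dist (cay_adj S) i x y.
Proof. by rewrite /at_dist !ballM. Qed.

Lemma inv_parity (T : finType) (f : T -> T) n : forall A : {set T},
  (#|A| <= n)%N -> (forall x, x \in A -> f x \in A) -> (forall x, x \in A -> f (f x) = x) ->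
  odd #|A| = odd #|[set x in A | f x == x]|.
Proof.
elim: n => [|n IH] A.
  rewrite leqn0 cards_eq0 => /eqP-> _ _.
  by rewrite cards0; congr (odd _); apply/eqP; rewrite eq_sym cards_eq0 -subset0; apply/subsetP=> x; rewrite !inE.
move=> An fA ffA.
case: (pickP [pred x in A | f x != x]) => [x /andP [xA fx]|nofix]; last first.
  suff -> : [set x in A | f x == x] = A by [].
  apply/setP=> x; rewrite inE; case: (boolP (x \in A)) => //= xA.
  by move: (nofix x); rewrite /= xA /= => /negbFE ->.
have fxA : f x \in A :\ x by rewrite !inE fx fA.
have cA : #|A| = (#|A :\ x :\ f x|).+2 by rewrite (cardsD1 x A) xA (cardsD1 (f x) (A :\ x)) fxA.
have sameF : [set y in A | f y == y] = [set y in A :\ x :\ f x | f y == y].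
  apply/setP=> y; rewrite !inE; case: (eqVneq (f y) y) => fy; rewrite ?andbF //.
  case: (eqVneq y (f x)) => [yfx|]; first by rewrite yfx ffA // in fy; rewrite -fy eqxx in fx.
  by case: (eqVneq y x) => // yx; rewrite yx in fy; rewrite fy eqxx in fx.
rewrite cA /= sameF -IH ?negbK //.
- by move: An; rewrite cA /= ltnS => /ltnW.
- move=> y; rewrite !inE => /and3P[yfx yx yA]; rewrite fA // andbT.
  apply/andP; split.
    by apply: contraNneq yx => /(congr1 f); rewrite !ffA // => ->.
  by apply: contraNneq yfx => e; rewrite -e ffA.
- by move=> y; rewrite !inE => /and3P[_ _ /ffA].
Qed.
Lemma card3 (T : finType) (A B C D : {set T}) :
  A :&: B = set0 -> A :&: C = set0 -> B :&: C = set0 -> A :|: B :|: C \subset D ->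
  (#|A| + #|B| + #|C| <= #|D|)%N.
Proof.
move=> AB AC BC sub; have := subset_leq_card sub.
by rewrite cardsU setIUl AC BC setU0 cards0 subn0 cardsU AB cards0 subn0.
Qed.

Theorem proposition5p5 (gT : finGroupType) (l : nat) (a b : gT)
  (S : {set gT}) :
  1 < l ->
  let m := (2 ^ l.-1)%N in
  <<[set a; b]>> = [set: gT] ->
  #|gT| = (4 * m)%N ->
  a ^+ (2 * m)%N = 1 -> b ^+ 2 = 1 -> b * a * b = a ^+ m.-1 ->
  1 \notin S -> S^-1 = S ->
  (exists k mu : nat,
     distance_regular (cay_adj S) 3 [:: k; k - 1; k - mu] [:: 1%N; mu; k]) ->
  let H := bip_part (cay_adj S) 1 in
  exists t : gT, [/\ #[t] = 2, t \notin H & H ><| <[t]> = [set: gT]].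
Proof.
move=> hl m Hgen Hcard Ham Hb2 Hbab S1 SV [k [mu [[_ _] Hall Hex Hbs Hcs]]] H.
have memSV : forall x, (x^-1 \in S) = (x \in S) by move=> x; rewrite -mem_invg SV.
have esym : forall x y, cay_adj S x y = cay_adj S y x.
  by move=> x y; rewrite /cay_adj -memSV invMg invgK.
have at1 : forall z, at_dist (cay_adj S) 1 z 1 = (z \in S).
  move=> z; rewrite /at_dist in_ballS !inE /=.
  case: (eqVneq z 1) => [->|nz1]; first by rewrite (negbTE S1) andbF.
  rewrite /= andbT.
  apply/existsP/idP => [[w /andP[]]|zS]; first by rewrite inE => /eqP-> ; rewrite /cay_adj invg1 mulg1.
  by exists z; rewrite inE eqxx /cay_adj invg1 mulg1.
have at0 : forall x, at_dist (cay_adj S) 0 x x by move=> x; rewrite /at_dist inE eqxx.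
have kS : k = #|S|.
  have := Hbs 0 1 1 erefl (at0 1); rewrite /= => <-.
  apply: eq_card => z; rewrite !inE at1 /cay_adj mul1g memSV.
  by rewrite andbb.
have deg : forall x, #|[set z | cay_adj S x z]| = k.
  move=> x; rewrite kS -(@card_preimset _ (fun z => x * z^-1) S).
    by apply: eq_card => z; rewrite !inE.
  by move=> y z /mulgI /invg_inj.
have dle : forall x y i, at_dist (cay_adj S) i x y -> (i <= 3)%N.
  by move=> x y i; apply: dist_le.
have tri : forall x z i j, cay_adj S z x -> at_dist (cay_adj S) i x 1 ->
    at_dist (cay_adj S) j z 1 -> (j <= i.+1)%N.
  move=> x z i j ezx /andP[Hi _] Hj.
  have [j' lej Hj'] := dist_ex (ball_step Hi ezx).
  by rewrite (dist_uniq Hj Hj').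
have bip : forall x z i j, cay_adj S x z -> at_dist (cay_adj S) i x 1 ->
    at_dist (cay_adj S) j z 1 -> odd j = ~~ odd i.
  move=> x z i j exz Hi Hj.
  have ezx : cay_adj S z x by rewrite esym.
  have ij := tri _ _ _ _ ezx Hi Hj.
  have ji := tri _ _ _ _ exz Hj Hi.
  have nij : i != j.
    apply/eqP => eij; subst j.
    case: i Hi Hj ij ji => [|i] Hi Hj _ _.
      move: Hi Hj; rewrite /at_dist !inE /= !andbT => /eqP x1 /eqP z1.
      by move: exz; rewrite -x1 -z1 /cay_adj invg1 mulg1 (negbTE S1).
    have i3 := dle _ _ _ Hi.
    pose X1 := [set w | cay_adj S x w && at_dist (cay_adj S) i.+2 w 1].
    pose X2 := [set w | cay_adj S x w && at_dist (cay_adj S) i w 1].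
    pose X3 := [set w | cay_adj S x w && at_dist (cay_adj S) i.+1 w 1].
    have c2 : #|X2| = nth 0 [:: 1%N; mu; k] i := Hcs i.+1 x 1 i3 Hi.
    have dis : forall u v, u != v -> [set w | cay_adj S x w && at_dist (cay_adj S) u w 1]
          :&: [set w | cay_adj S x w && at_dist (cay_adj S) v w 1] = set0.
      move=> u v uv; apply/setP => w; rewrite !inE.
      apply/negbTE; apply/negP => /andP[/andP[_ Hu] /andP[_ Hv]].
      by move: uv; rewrite (dist_uniq Hu Hv) eqxx.
    have := @card3 _ X1 X2 X3 [set w | cay_adj S x w].
    rewrite !dis ?deg; try by apply/eqP; lia.
    move=> /(_ erefl erefl erefl) tot.
    have sub : X1 :|: X2 :|: X3 \subset [set w | cay_adj S x w].
      by apply/subsetP => w; rewrite !inE => /orP[/orP[]|] /andP[->].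
    have {}tot := tot sub.
    have X3n : (0 < #|X3|)%N by rewrite card_gt0; apply/set0Pn; exists z; rewrite inE exz Hj.
    move: i3 Hi c2 tot X3n; rewrite /X1 /X2 /X3; clear X1 X2 X3 sub Hj dis.
    case: i => [|[|[|i]]] //= _ Hi c2 tot X3n.
    - have := Hbs 1%N x 1 erefl Hi; rewrite /= => b1; lia.
    - have := Hbs 2%N x 1 erefl Hi; rewrite /= => b1; lia.
    - lia.
  have : (j == i.+1) || (i == j.+1) by lia.
  by case/orP => /eqP->; rewrite /= ?negbK.
pose p x := [exists i : 'I_4, odd i && at_dist (cay_adj S) i x 1].
have pE : forall i x, at_dist (cay_adj S) i x 1 -> p x = odd i.
  move=> i x Hi; have i3 := dle _ _ _ Hi.
  apply/existsP/idP => [[j /andP[oj Hj]]|oi].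
    by rewrite -(dist_uniq Hj Hi).
  have i4 : (i < 4)%N by lia.
  by exists (Ordinal i4); rewrite /= oi Hi.
have p_edge : forall x z, cay_adj S x z -> p z = ~~ p x.
  move=> x z exz.
  have [i _ Hi] := dist_ex (Hall x 1); have [j _ Hj] := dist_ex (Hall z 1).
  by rewrite (pE _ _ Hi) (pE _ _ Hj) (bip _ _ _ _ exz Hi Hj).
have pS : forall s x, s \in S -> p (s * x) = ~~ p x.
  move=> s x sS; apply: p_edge.
  by rewrite /cay_adj invMg mulgA mulgV mul1g memSV.
have p1 : p 1 = false by rewrite (pE 0%N 1 (at0 1)).
have pM : forall x y, p (x * y) = p x (+) p y.
  move=> x y; have := Hall 1 x; move: 3%N => n.
  elim: n x => [|n IH] x; first by rewrite inE => /eqP->; rewrite mul1g p1.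
  rewrite in_ballS => /orP[/IH //| /existsP [w /andP[wn ewx]]].
  have sS : x * w^-1 \in S by rewrite -memSV invMg invgK.
  have xE : x = (x * w^-1) * w by rewrite mulgVK.
  move: sS xE; set s := x * w^-1 => sS ->.
  rewrite -mulgA (pS s (w * y)) // (pS s w) // IH //.
  by case: (p w); case: (p y).
have pV : forall x, p x^-1 = p x.
  move=> x; have := pM x x^-1; rewrite mulgV p1.
  by case: (p x); case: (p x^-1).
have pX : forall x n, p (x ^+ n) = odd n && p x.
  move=> x; elim=> [|n IH]; first by rewrite expg0 p1.
  by rewrite expgS pM IH /=; case: (p x); case: (odd n).
have Heq : H = [set y | ~~ p y].
  apply/setP => y; rewrite /H /bip_part !inE.
  apply/existsP/idP.
    case=> i /andP[ev Hi].
    rewrite -(distM S i 1 y y^-1) mul1g mulgV in Hi.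
    by rewrite -pV (pE _ _ Hi).
  move=> py; have [j jle Hj] := dist_ex (Hall y^-1 1).
  have jlt : (j < #|gT|)%N by rewrite Hcard; lia.
  exists (Ordinal jlt); rewrite /= -(pE _ _ Hj) pV py /=.
  by rewrite -(distM S j 1 y y^-1) mul1g mulgV.
have gsH : group_set H.
  rewrite Heq; apply/group_setP; split; first by rewrite inE p1.
  by move=> x y; rewrite !inE pM; case: (p x); case: (p y).
have invX : forall y : gT, y * y = 1 -> forall i, y ^+ i = if odd i then y else 1.
  move=> y yy; elim=> [|i IH]; first by rewrite expg0.
  by rewrite expgS IH /=; case: (odd i); rewrite ?yy ?mulg1.
have bb : b * b = 1 by rewrite -Hb2 expgS expg1.
have bV : b^-1 = b by apply/eqP; rewrite eq_invg_mul bb.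
have bX := invX b bb.
case pb: (p b).
  have b1 : b != 1 by apply: contraTneq pb => ->; rewrite p1.
  exists b; split.
  - have d : (#[b] %| 2)%N by rewrite order_dvdn Hb2.
    have := order_gt0 b; have : #[b] != 1%N by rewrite order_eq1.
    have := dvdn_leq (erefl true : (0 < 2)%N) d; lia.
  - by rewrite Heq inE pb.
  pose Hg := Group gsH.
  have -> : H = Hg by [].
  rewrite sdprodE.
  - apply/eqP; rewrite eqEsubset subsetT /=; apply/subsetP => x _.
    case px: (p x).
      have -> : x = (x * b^-1) * b by rewrite mulgVK.
      by apply: mem_mulg; [rewrite /= Heq inE pM pV px pb | apply: cycle_id].
    rewrite -[x]mulg1; apply: mem_mulg; first by rewrite /= Heq inE px.
    exact: group1.
  - rewrite cycle_subG; apply/normP; apply/eqP.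
    rewrite eqEcard cardJg leqnn andbT; apply/subsetP=> x.
    by rewrite mem_conjg /= Heq !inE conjgE !pM !pV; case: (p x); case: (p b).
  apply/eqP; rewrite eqEsubset sub1G andbT; apply/subsetP => x.
  rewrite inE => /andP[xH /cycleP[i xi]]; move: xH; rewrite xi /= Heq inE pX pb bX.
  by case: (odd i); rewrite // group1.
exfalso.
have [m2 [mE m2p]] : exists m2, m = (2 * m2)%N /\ (0 < m2)%N.
  exists (2 ^ l.-2)%N; split; last by rewrite expn_gt0.
  by rewrite /m (_ : l.-1 = (l.-2).+1) ?expnS //; lia.
have Na : b \in 'N(<[a]>).
  apply/normP; apply/eqP; rewrite eqEcard cardJg leqnn andbT -cycleJ cycle_subG.
  by rewrite conjgE bV mulgA Hbab groupX ?cycle_id.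
have Gab : forall x, x \in <[a]> * <[b]>.
  move=> x; rewrite -norm_joinEr ?cycle_subG //.
  have : x \in <<[set a; b]>> by rewrite Hgen inE.
  apply: subsetP; rewrite gen_subG; apply/subsetP => y; rewrite !inE => /orP[/eqP->|/eqP->].
    by apply: (subsetP (joing_subl _ _)); apply: cycle_id.
  by apply: (subsetP (joing_subr _ _)); apply: cycle_id.
have notA : forall x, x \notin <[a]> -> exists i, x = a ^+ i * b.
  move=> x xa; case/mulsgP: (Gab x) => u v /cycleP[i ->] /cycleP[j ->] xE.
  exists i; move: xa; rewrite xE bX; case: (odd j) => //.
  by rewrite mulg1 groupX ?cycle_id.
have ordA : #[a] = (2 * m)%N.
  have d : (#[a] %| 2 * m)%N by rewrite order_dvdn Ham.
  have le1 : (#[a] <= 2 * m)%N by apply: dvdn_leq d; lia.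
  have cardG : (4 * m <= #[a] * 2)%N.
    rewrite -Hcard -cardsT.
    have -> : [set: gT] = <[a]> * <[b]> by apply/setP=> x; rewrite inE Gab.
    have := mul_cardG <[a]> <[b]>.
    have I1 : (0 < #|<[a]> :&: <[b]>|)%N by rewrite card_gt0; apply/set0Pn; exists 1; rewrite inE !group1.
    have b2 : (#[b] <= 2)%N by apply: dvdn_leq => //; rewrite order_dvdn Hb2.
    move=> E; apply: (@leq_trans (#|<[a]> * <[b]>| * #|<[a]> :&: <[b]>|)).
      by rewrite leq_pmulr.
    by rewrite -E leq_mul2l b2 orbT.
  lia.
pose c := a ^+ m.
have cc : c * c = 1 by rewrite /c -expgD addnn -mul2n Ham.
have cV : c^-1 = c by apply/eqP; rewrite eq_invg_mul cc.
have c1 : c != 1.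
  apply/eqP => c1; have : (#[a] %| m)%N by rewrite order_dvdn -/c c1.
  by rewrite ordA => /dvdn_leq; lia.
have ca : c \in <[a]> by rewrite groupX ?cycle_id.
have pc : p c = false by rewrite /c pX mE oddM.
have invol : forall u, u \in <[a]> -> u * u = 1 -> u = 1 \/ u = c.
  move=> u /cycleP[i ->] uu.
  have : (#[a] %| i + i)%N by rewrite order_dvdn expgD uu.
  rewrite ordA addnn -mul2n dvdn_pmul2l // => /dvdnP[q ->].
  by rewrite mulnC expgM -/c (invX c cc); case: (odd q); [right|left].
have commA : forall x y, x \in <[a]> -> y \in <[a]> -> x * y = y * x.
  by move=> x y /cycleP[i ->] /cycleP[j ->]; apply: commuteX2.
have sq_out : forall s, s \notin <[a]> -> p s = true -> s * s = c.
  move=> s sa ps; have [i si] := notA s sa.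
  move: ps; rewrite si pM pb pX addbF => /andP[oi pa].
  have bab_i : b * a ^+ i * b = a ^+ (m.-1 * i).
    by rewrite -mulgA -{1}bV -conjgE conjXg conjgE bV mulgA Hbab -expgM.
  rewrite -mulgA (mulgA b) bab_i -expgD.
  have -> : (i + m.-1 * i = m + 2 * m * i./2)%N.
    have := odd_double_half i; rewrite oi -muln2.
    move: (i./2) => j iE; have {}iE : i = (j * 2).+1 by rewrite -iE.
    rewrite iE; case: (m) mE => [|m'] /= mE; [lia|nia].
  by rewrite expgD expgM Ham expg1n mulg1.
have sq_inv : forall u, u * u = c -> c * u = u^-1 /\ u * c = u^-1.
  move=> u uu; have uV : u^-1 = u * u * u.
    by apply/eqP; rewrite eq_invg_mul !mulgA -(mulgA (u * u)) uu cc.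
  by split; rewrite uV -uu ?mulgA.
have pSt : forall s, s \in S -> p s = true by move=> s sS; rewrite -[s]mulg1 pS // p1.
have dist2 : forall h, p h = false -> h != 1 ->
    #|[set z | (h * z^-1 \in S) && (z \in S)]| = mu.
  move=> h ph h1; have [i ile Hi] := dist_ex (Hall h 1).
  have oi := pE _ _ Hi; rewrite ph in oi.
  have i2 : i = 2%N.
    case: i ile Hi oi => [|[|[|[|i]]]] // _ Hi _.
    by move: Hi; rewrite /at_dist inE andbT => /eqP h1'; rewrite h1' eqxx in h1.
  move: Hi; rewrite i2 => Hi.
  have := Hcs 2%N h 1 erefl Hi; rewrite /= => <-.
  by apply: eq_card => z; rewrite !inE at1.
have muE : ~~ odd mu.
  rewrite -(dist2 c pc c1).
  rewrite (@inv_parity _ (fun z => z * c) #|gT|) ?max_card //.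
  - have -> : [set x in [set z | (c * z^-1 \in S) && (z \in S)] | x * c == x] = set0.
      apply/setP=> z; rewrite !inE; case: (eqVneq (z * c) z) => [zc|]; last by rewrite andbF.
      by move/(congr1 (mulg z^-1)): zc; rewrite mulKg mulVg => c1'; rewrite c1' eqxx in c1.
    by rewrite cards0.
  - move=> z; rewrite !inE => /andP[cz zS].
    by rewrite invMg cV mulgA cc mul1g memSV zS -memSV invMg cV cz.
  - by move=> z _; rewrite -mulgA cc mulg1.
have cS : forall w, w \in S -> c * w \in S.
  move=> w wS; case: (boolP (w \in <[a]>)) => wa; last first.
    by have [-> _] := sq_inv w (sq_out w wa (pSt w wS)); rewrite memSV.
  pose h := w * w.
  have ph : p h = false by rewrite pM; case: (p w).
  have ha : h \in <[a]> by rewrite groupM.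
  have h1 : h != 1.
    apply/eqP => hh; case: (invol w wa hh) => wE; move: (pSt w wS); by rewrite wE ?p1 ?pc.
  have := dist2 h ph h1; set P := [set z | _] => Pc.
  pose f z := if z \in <[a]> then h * z^-1 else z^-1.
  have fP : forall z, z \in P -> f z \in P.
    move=> z; rewrite !inE => /andP[hz zS]; rewrite /f; case: (boolP (z \in <[a]>)) => za.
      by rewrite hz andbT invMg invgK mulgA (commA h z) // mulgK.
    rewrite invgK memSV zS andbT.
    have ua : h * z^-1 \notin <[a]>.
      apply: contra za => hza.
      have -> : z = (h * z^-1)^-1 * h by rewrite invMg invgK mulgVK.
      by rewrite groupM ?groupV.
    have hzE : h * z = (h * z^-1) * c by rewrite -(sq_out z za (pSt z zS)) !mulgA mulgVK.
    by rewrite hzE; have [_ ->] := sq_inv _ (sq_out _ ua (pSt _ hz)); rewrite memSV.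
  have ffP : forall z, z \in P -> f (f z) = z.
    move=> z _; rewrite /f; case: (boolP (z \in <[a]>)) => za.
      have hza : h * z^-1 \in <[a]> by rewrite groupM ?groupV.
      by rewrite hza invMg invgK mulgA (commA h z) // mulgK.
    by rewrite groupV (negbTE za) invgK.
  have := @inv_parity _ f #|gT| P (max_card _) fP ffP.
  rewrite Pc (negbTE muE) => Fodd.
  case: (boolP (c * w \in S)) => // cw; exfalso.
  have Fw : [set z in P | f z == z] = [set w].
    apply/setP => z; rewrite !inE; apply/andP/eqP.
      case=> /andP[hz zS]; rewrite /f; case: (boolP (z \in <[a]>)) => za fz.
        move/eqP: fz => fz; have hzz : h = z * z by rewrite -{1}fz mulgVK.
        have uu : (z * w^-1) * (z * w^-1) = 1.
          rewrite -mulgA (mulgA w^-1) -(commA z w^-1) ?groupV // !mulgA -hzz /h.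
          by rewrite mulgK mulgV.
        have wia : w^-1 \in <[a]> by rewrite groupV.
        case: (invol _ (groupM za wia) uu) => ue.
          by move/(congr1 (mulg^~ w)): ue; rewrite mulgVK mul1g.
        by move/(congr1 (mulg^~ w)): ue; rewrite mulgVK => zE; rewrite -zE zS in cw.
      by move: fz; rewrite eq_invg_mul (sq_out z za (pSt z zS)) (negbTE c1).
    move=> ->; rewrite /f wa /h -mulgA mulgV mulg1 eqxx wS.
    by [].
  by move: Fodd; rewrite Fw cards1.
have PcS : #|[set z | (c * z^-1 \in S) && (z \in S)]| = k.
  rewrite kS; apply: eq_card => z; rewrite !inE.
  by case: (boolP (z \in S)) => zS; rewrite ?andbF ?andbT // cS // memSV.
have muk : mu = k by rewrite -(dist2 c pc c1) PcS.
case: Hex => x [y Hxy].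
have kpos : (0 < k)%N.
  move: (Hxy) => /andP[H3 H2]; rewrite /= in H2.
  rewrite in_ballS (negbTE H2) /= in H3; case/existsP: H3 => w /andP[_ ewy].
  by rewrite kS card_gt0; apply/set0Pn; exists (w * y^-1).
have := Hcs 3%N x y erefl Hxy; rewrite /= => c3.
have : [set z | cay_adj S x z && at_dist (cay_adj S) 2 z y] != set0 by rewrite -card_gt0 c3.
case/set0Pn => z; rewrite inE => /andP[exz Hz].
have := Hbs 2%N z y erefl Hz; rewrite /= muk subnn => /eqP; rewrite cards_eq0 => /eqP/setP/(_ x).
by rewrite !inE esym exz Hxy.
Qed.
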